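(* Fix $n\ge1$ and a polynomial $h(x)=h_0+h_1x+\dots+h_{n+1}x^{n+1}$ with $h(1)\ne0$. Define $(a_k)_{k\ge0}$ by $\sum_{k\ge0}a_kx^k=h(x)/(1-x)^{n+1}$, and for each integer $b\ge1$ let $h^{\langle b\rangle}(x)$ be the polynomial of degree at most $n+1$ such that $\sum_{k\ge0}a_{bk}x^k=h^{\langle b\rangle}(x)/(1-x)^{n+1}$. Then, coefficientwise as $b\to\infty$, $$\frac{h^{\langle b\rangle}(x)}{b^n\,h(1)}\longrightarrow\frac{p_n(x)}{n!},$$ where $p_n(x)=\sum_{j\ge0}A(n,j)x^{j+1}$ is the $n$th Eulerian polynomial.
   Context: $A(n,j)$ is the number of permutations $\sigma\in S_n$ with exactly $j$ descents (a descent at $i$, $1\le i\le n-1$, means $\sigma(i+1)<\sigma(i)$). *)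

(* Defs.v *)
From HB Require Import structures.
From mathcomp Require Import all_boot all_order all_algebra all_fingroup.
Set Implicit Arguments. Unset Strict Implicit. Unset Printing Implicit Defensive.
Import Order.TTheory GRing.Theory Num.Theory.
Local Open Scope ring_scope.

Definition des (n : nat) (s : 'S_n) : nat :=
  #|[set i : 'I_n | [exists j : 'I_n, (val j == i.+1) && (s j < s i)%N]]|.

Definition eulerianA (n j : nat) : nat := #|[set s : 'S_n | des s == j]|.

(* k-th coefficient of the n-th Eulerian polynomial p_n(x) = sum_j A(n,j) x^(j+1). *)
Definition eulerian_coef (n k : nat) : nat :=
  if k is k'.+1 then eulerianA n k' else 0%N.

(* a_k = [x^k] h(x)/(1-x)^(n+1), using 1/(1-x)^(n+1) = sum_m C(n+m,n) x^m. *)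
Definition ser_coef (R : ringType) (n : nat) (h : {poly R}) (k : nat) : R :=
  \sum_(i < k.+1) h`_i * ('C(n + (k - i), n))%:R.

(* [x^k] of (1-x)^(n+1) * sum_m a_(b m) x^m ; this is the k-th coefficient of h^<b>. *)
Definition hb_coef (R : ringType) (n : nat) (h : {poly R}) (b k : nat) : R :=
  \sum_(i < k.+1) (-1) ^+ i * ('C(n.+1, i))%:R * ser_coef n h (b * (k - i)).

Definition converges_to (R : numFieldType) (u : nat -> R) (l : R) : Prop :=
  forall eps : R, 0 < eps -> exists N : nat, forall m : nat, (N <= m)%N -> `|u m - l| < eps.

(* Main.v *)
Require Import Defs.
From HB Require Import structures.
From mathcomp Require Import all_boot all_order all_algebra all_fingroup.
From Stdlib Require Import Lia.
Set Implicit Arguments. Unset Strict Implicit. Unset Printing Implicit Defensive.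

Fixpoint desl (s : seq nat) : nat :=
  if s is x :: s' then (if s' is y :: _ then (y < x) + desl s' else 0) else 0.

Fixpoint insm (m p : nat) (t : seq nat) : seq nat :=
  if p is p'.+1 then (if t is x :: s then x :: insm m p' s else [:: m]) else m :: t.

Ltac nlia := repeat match goal with H : is_true (_ <= _) |- _ => move/leP: H => H end;
  try (apply/leP); unfold addn, subn, muln in *; lia.

Lemma deslCC x y s : desl [:: x, y & s] = (y < x) + desl (y :: s). Proof. by []. Qed.
Lemma desl1 x : desl [:: x] = 0. Proof. by []. Qed.
Lemma insmS m p x s : insm m p.+1 (x :: s) = x :: insm m p s. Proof. by []. Qed.
Lemma insm0 m t : insm m 0 t = m :: t. Proof. by []. Qed.
Lemma insm_nil m p : insm m p [::] = [:: m]. Proof. by case: p. Qed.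

Lemma insmE m p t : insm m p t = take p t ++ m :: drop p t.
Proof. by elim: t p => [|x s IH] [|p] //=; rewrite IH. Qed.

Lemma desl_le t : desl t <= (size t).-1.
Proof.
elim: t => [|x [|y s] IH] //.
rewrite deslCC /=; move: IH => /=.
by case: (y < x) => ?; rewrite ?add0n ?add1n ?ltnS // (leq_trans _ (leqnSn _)).
Qed.

Lemma insm_bounds m t p : all (fun x => x < m) t ->
  desl t <= desl (insm m p t) <= (desl t).+1.
Proof.
elim: t p => [|x s IH] p; first by rewrite insm_nil.
move=> /andP[xm sm]; rewrite /= in xm; have mx : (m < x) = false by rewrite ltnNge (ltnW xm).
case: p => [|p].
  case: s sm {IH} => [|y s] sm; first by rewrite insm0 deslCC xm.
  by rewrite insm0 [desl (m :: _)]deslCC xm add1n leqnSn leqnn.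
case: s IH sm => [|y s] IH sm; first by case: p => [|p]; rewrite insmS ?insm_nil deslCC mx.
have /andP[ym _] := sm; rewrite /= in ym.
case: p => [|p].
  rewrite insmS insm0 !deslCC ym mx add0n add1n.
  by case: (y < x); rewrite ?add1n ?add0n ?leqnSn ?leqnn.
have := IH p.+1 sm; rewrite !insmS !deslCC -insmS.
by case: (y < x); rewrite ?add1n ?add0n ?ltnS.
Qed.

Lemma insm_sum m t : all (fun x => x < m) t ->
  \sum_(p < (size t).+1) (desl (insm m p t) - desl t) = size t - desl t.
Proof.
elim: t => [|x s IH]; first by rewrite big_ord1 insm_nil.
move=> /andP[xm sm]; rewrite /= in xm; have mx : (m < x) = false by rewrite ltnNge (ltnW xm).
rewrite big_ord_recl.
case: s IH sm => [|y s] IH sm.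
  by rewrite big_ord1 insm0 insmS insm_nil !deslCC xm mx.
rewrite big_ord_recl.
have /andP[ym sm2] := sm; rewrite /= in ym.
have e : forall p : nat, desl (insm m p.+2 [:: x, y & s]) - desl [:: x, y & s] =
   desl (insm m p.+1 (y :: s)) - desl (y :: s).
  by move=> p; rewrite insmS insmS deslCC -insmS deslCC subnDl.
rewrite (eq_bigr (fun p : 'I__ => desl (insm m (bump 0 p) (y :: s)) - desl (y :: s)) (fun p _ => e p)).
move: (IH sm); rewrite big_ord_recl insm0 deslCC ym add1n subSnn => IH'.
have hle := desl_le (y :: s).
rewrite insm0 insmS insm0 !deslCC xm mx ym add0n add1n.
set S := \sum_(i < _) _.
have -> : S = size (y :: s) - desl (y :: s) - 1.
  by rewrite -IH'; rewrite /S addKn.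
have hb : (y < x) <= 1 by case: (y < x).
move: hle; rewrite /= => hle; nlia.
Qed.

Lemma insm_count m t j : all (fun x => x < m) t ->
  \sum_(p < (size t).+1) (desl (insm m p t) == j) =
  (desl t == j) * (desl t).+1 + ((desl t).+1 == j) * (size t - desl t).
Proof.
move=> hall.
have hb := fun p => insm_bounds p hall.
have hsum := insm_sum hall.
have hdl := desl_le t.
have hdl' : desl t <= size t := leq_trans hdl (leq_pred _).
have split1 : \sum_(p < (size t).+1) (desl (insm m p t) == desl t) +
    \sum_(p < (size t).+1) (desl (insm m p t) - desl t) = (size t).+1.
  rewrite -big_split /= -[X in _ = X]card_ord -sum1_card.
  apply: eq_bigr => p _; have /andP[h1 h2] := hb p.
  by case: eqP => [->|ne]; rewrite ?subnn //= add0n; nlia.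
have [ej|nej] := eqVneq (desl t) j.
  subst j; have -> : ((desl t).+1 == desl t) = false by elim: (desl t).
  rewrite mul1n mul0n addn0; move: split1; rewrite hsum => ?; nlia.
rewrite mul0n add0n.
have [ej1|nej1] := eqVneq (desl t).+1 j.
  rewrite mul1n -hsum -ej1; apply: eq_bigr => p _; have /andP[h1 h2] := hb p.
  case: eqP => [e|ne]; first by rewrite e subSnn.
  have : desl (insm m p t) = desl t by nlia.
  by move=> ->; rewrite subnn.
rewrite mul0n big1 // => p _; have /andP[h1 h2] := hb p.
case: eqP => // e; exfalso; subst j.
have : desl (insm m p t) = desl t \/ desl (insm m p t) = (desl t).+1 by nlia.
by case=> ee; [rewrite ee eqxx in nej | rewrite ee eqxx in nej1].
Qed.

Definition Pn n := permutations (iota 0 n).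

Lemma iotaSr n : perm_eq (iota 0 n.+1) (n :: iota 0 n).
Proof. by rewrite -addn1 iotaD add0n cats1 perm_rcons. Qed.

Lemma insm_perm n p t : perm_eq (insm n p t) (n :: t).
Proof.
by rewrite insmE -cat1s perm_catCA /= cat_take_drop.
Qed.

Lemma insm_index n p t : n \notin t -> p <= size t -> index n (insm n p t) = p.
Proof.
move=> nt pt; rewrite insmE index_cat.
have -> : n \in take p t = false by apply/negP => /mem_take; rewrite (negbTE nt).
by rewrite /= eqxx addn0 size_takel.
Qed.

Lemma insm_rem n p t : n \notin t -> p <= size t -> rem n (insm n p t) = t.
Proof.
move=> nt pt; rewrite remE insm_index //; rewrite insmE.
rewrite take_size_cat ?size_takel // drop_cat size_takel // ltnNge leqnSn /= subSnn /=.
by rewrite drop0 cat_take_drop.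
Qed.

Lemma perm_ins n : perm_eq (Pn n.+1) [seq insm n p t | t <- Pn n, p <- iota 0 n.+1].
Proof.
apply: uniq_perm; first exact: permutations_uniq.
  apply: allpairs_uniq; [exact: permutations_uniq | exact: iota_uniq|].
  move=> [t1 p1] [t2 p2] /allpairsP[[a b] [ha hb ->]] /allpairsP[[c d] [hc hd ->]] /= e.
  rewrite /= /Pn mem_permutations in ha; rewrite /= /Pn mem_permutations in hc.
  rewrite mem_iota add0n in hb; rewrite mem_iota add0n in hd; rewrite /= in hb hd.
  have nn : forall t, perm_eq t (iota 0 n) -> n \notin t.
    by move=> t /perm_mem ->; rewrite mem_iota ltnn andbF.
  have sz : forall t, perm_eq t (iota 0 n) -> size t = n.
    by move=> t /perm_size ->; rewrite size_iota.
  have e1 := congr1 (index n) e; have e2 := congr1 (rem n) e.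
  have hb' : b <= size a by rewrite sz.
  have hd' : d <= size c by rewrite sz.
  rewrite !insm_index ?nn // in e1; rewrite !insm_rem ?nn // in e2.
  by rewrite e1 e2.
move=> t'; rewrite /Pn mem_permutations; apply/idP/allpairsP.
  move=> ht'.
  have nt' : n \in t' by rewrite (perm_mem ht') mem_iota leqnn.
  have hlt : index n t' < size t' by rewrite index_mem.
  have hsz : size t' = n.+1 by rewrite (perm_size ht') size_iota.
  suff [h1 h2 h3] : [/\ rem n t' \in Pn n, index n t' \in iota 0 n.+1 &
      t' = insm n (index n t') (rem n t')] by exists (rem n t', index n t').
  split.
  - rewrite /Pn mem_permutations -(perm_cons n).
    apply: (@perm_trans _ t'); first by rewrite perm_sym perm_to_rem.
    exact: perm_trans ht' (iotaSr n).
  - by rewrite mem_iota add0n -hsz hlt.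
  - rewrite insmE remE take_size_cat ?size_takel ?(ltnW hlt) //.
    rewrite drop_size_cat ?size_takel ?(ltnW hlt) //.
    by rewrite -{1}(cat_take_drop (index n t') t') (drop_nth n hlt) nth_index.
move=> [[t p] [ht hp ->]] /=.
rewrite mem_permutations in ht.
apply: perm_trans (insm_perm _ _ _) _.
by rewrite perm_sym; apply: perm_trans (iotaSr n) _; rewrite perm_cons perm_sym.
Qed.

Definition cntl n j := \sum_(t <- Pn n) (desl t == j).

Lemma cntl_rec n j : cntl n.+1 j =
  j.+1 * cntl n j + (if j is j'.+1 then (n - j') * cntl n j' else 0).
Proof.
rewrite /cntl (perm_big _ (perm_ins n)) big_allpairs_dep /=.
have step : forall t, t \in Pn n -> \sum_(p <- iota 0 n.+1) (desl (insm n p t) == j) =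
    j.+1 * (desl t == j) + (if j is j'.+1 then (n - j') * (desl t == j') else 0).
  move=> t; rewrite /Pn mem_permutations => ht.
  have hsz : size t = n by rewrite (perm_size ht) size_iota.
  have hall : all (fun x => x < n) t.
    by apply/allP => x; rewrite (perm_mem ht) mem_iota.
  have -> : iota 0 n.+1 = index_iota 0 (size t).+1 by rewrite /index_iota subn0 hsz.
  rewrite big_mkord insm_count // hsz.
  case: eqP => [<-|ne].
    case: (desl t) => [|d] /=; first by rewrite addn0.
    have -> : (d.+2 == d.+1) = false by elim: d.
    by rewrite (_ : (d.+1 == d) = false) ?mul1n ?muln1 ?mul0n ?muln0 //; elim: d.
  case: j ne => [|j'] ne /=; first by rewrite mul0n add0n.
  rewrite mul0n add0n eqSS mulnC; case: eqP => [->|]; rewrite ?muln0 ?muln1 //.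
rewrite big_seq_cond (eq_bigr _ (fun t ht => step t (andP ht).1)) -big_seq_cond.
rewrite big_split /= big_distrr /=; congr (_ + _).
by case: j {step} => [|j']; [rewrite big1 | rewrite big_distrr].
Qed.

Lemma desl_sum t : desl t = \sum_(i < size t) ((i.+1 < size t) && (nth 0 t i.+1 < nth 0 t i)).
Proof.
elim: t => [|x s IH]; first by rewrite big_ord0.
rewrite big_ord_recl /=.
case: s IH => [|y s] IH; first by rewrite big_ord0.
rewrite IH /=; congr (_ + _).
Qed.

Definition Fp n (s : 'S_n) : seq nat := [seq val (s i) | i <- enum 'I_n].

Lemma size_Fp n (s : 'S_n) : size (Fp s) = n.
Proof. by rewrite size_map size_enum_ord. Qed.

Lemma nth_Fp n (s : 'S_n) (i : 'I_n) : nth 0 (Fp s) i = s i.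
Proof.
rewrite (nth_map i) ?size_enum_ord //; congr (val (s _)).
by apply: val_inj; rewrite /= nth_enum_ord.
Qed.

Lemma desl_Fp n (s : 'S_n) : desl (Fp s) = des s.
Proof.
rewrite desl_sum /des size_Fp -sum1_card big_mkcond /=.
rewrite [RHS]big_mkcond /=.
apply: eq_bigr => i _; rewrite inE.
case: (ltnP i.+1 n) => hi /=.
  rewrite (nth_Fp s (Ordinal hi)) nth_Fp.
  case: existsP => [[j /andP[/eqP hj hs]]|hn].
    have e : Ordinal hi = j by apply: val_inj => /=; rewrite -hj.
    by rewrite e hs.
  case: ltnP => // h; exfalso; apply: hn; exists (Ordinal hi); by rewrite /= eqxx h.
case: existsP => // [[j /andP[/eqP hj _]]].
by have := ltn_ord j; rewrite hj ltnNge hi.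
Qed.

Lemma Fp_inj n : injective (@Fp n).
Proof.
move=> s1 s2 e; apply/permP => i; apply: val_inj.
by move: (congr1 (nth 0 ^~ i) e); rewrite !nth_Fp.
Qed.

Lemma Fp_perm n (s : 'S_n) : perm_eq (Fp s) (iota 0 n).
Proof.
apply: uniq_perm; [|exact: iota_uniq|].
  by rewrite map_inj_uniq ?enum_uniq // => i j /val_inj /perm_inj.
move=> x; rewrite mem_iota add0n /=; apply/mapP/idP => [[i _ ->]|hx].
  exact: ltn_ord.
exists ((s^-1)%g (Ordinal hx)); first by rewrite mem_enum.
by rewrite permKV.
Qed.

Lemma Fp_surj n t : perm_eq t (iota 0 n) -> exists s : 'S_n, Fp s = t.
Proof.
move=> ht.
have hsz : size t = n by rewrite (perm_size ht) size_iota.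
have hu : uniq t by rewrite (perm_uniq ht) iota_uniq.
have hlt : forall i : 'I_n, nth 0 t i < n.
  move=> i; have : nth 0 t i \in t by rewrite mem_nth // hsz.
  by rewrite (perm_mem ht) mem_iota.
pose f := fun i : 'I_n => insubd i (nth 0 t i) : 'I_n.
have hf : forall i, val (f i) = nth 0 t i by move=> i; rewrite val_insubd hlt.
have finj : injective f.
  move=> i j /(congr1 val); rewrite !hf => /eqP; rewrite nth_uniq ?hsz // => /eqP.
  exact: val_inj.
exists (perm finj); apply: (@eq_from_nth _ 0); first by rewrite size_Fp hsz.
move=> i; rewrite size_Fp => hi.
by rewrite (nth_Fp _ (Ordinal hi)) permE hf.
Qed.

Lemma eulerianA_cntl n j : eulerianA n j = cntl n j.
Proof.
rewrite /cntl /eulerianA.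
have -> : \sum_(t <- Pn n) (desl t == j) = count (fun t => desl t == j) (Pn n).
  by rewrite -sum1_count [RHS]big_mkcond.
rewrite -size_filter cardE -(size_map (@Fp n)).
apply: perm_size; apply: uniq_perm.
- by rewrite map_inj_uniq ?enum_uniq //; exact: Fp_inj.
- by rewrite filter_uniq // permutations_uniq.
move=> t; rewrite mem_filter /Pn mem_permutations; apply/mapP/andP.
  move=> [s]; rewrite mem_enum inE => /eqP hs ->.
  by rewrite desl_Fp hs Fp_perm.
move=> [/eqP hd ht]; have [s hs] := Fp_surj ht.
by exists s => //; rewrite mem_enum inE -desl_Fp hs hd.
Qed.

Import Order.TTheory GRing.Theory Num.Theory.
Local Open Scope ring_scope.

Section Alg.
Variable R : comNzRingType.

Definition FF (c m u : nat) : R :=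
  \sum_(i < u.+1) (-1) ^+ i * ('C(c, i))%:R * ((u - i)%:R) ^+ m.

Lemma FF_pascal c m u : FF c.+1 m u.+1 = FF c m u.+1 - FF c m u.
Proof.
rewrite /FF big_ord_recl [in X in _ = X - _]big_ord_recl /= !bin0 subn0.
under eq_bigr => i _ do rewrite /bump /= add1n binS natrD mulrDr mulrDl subSS.
rewrite big_split /= addrA; congr (_ + _).
rewrite -sumrN; apply: eq_bigr => i _.
by rewrite exprS !mulN1r !mulNr.
Qed.

Lemma ring_aux (x y z w p : R) : x * y * ((w - z) * p) = w * (x * y * p) - x * (z * y) * p.
Proof.
rewrite mulrBl mulrBr mulrCA; congr (_ - _).
by rewrite [z * y]mulrC !mulrA.
Qed.

Lemma FF_mul c m u : FF c.+1 m.+1 u.+1 = u.+1%:R * FF c.+1 m u.+1 + c.+1%:R * FF c m u.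
Proof.
rewrite /FF.
have e : forall i : 'I_u.+2, (-1 : R) ^+ i * ('C(c.+1, i))%:R * ((u.+1 - i)%:R) ^+ m.+1 =
   u.+1%:R * ((-1 : R) ^+ i * ('C(c.+1, i))%:R * ((u.+1 - i)%:R) ^+ m)
   - (-1) ^+ i * (i * 'C(c.+1, i))%:R * ((u.+1 - i)%:R) ^+ m.
  move=> i.
  have hi : (i <= u.+1)%N by rewrite -ltnS ltn_ord.
  by rewrite exprS (natrB _ hi) natrM ring_aux.
rewrite (eq_bigr _ (fun i _ => e i)) sumrB -mulr_sumr; congr (_ + _).
rewrite big_ord_recl /= mul0n mulr0 mul0r add0r.
rewrite -sumrN mulr_sumr; apply: eq_bigr => i _.
rewrite /bump /= add1n -(mul_bin_diag c.+1 i) natrM subSS exprS !mulN1r.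
rewrite !mulNr opprK /=.
by rewrite mulrCA !mulrA.
Qed.

Definition GG n u := FF n.+1 n u.

Lemma GG_rec n j : GG n.+1 j.+1 = j.+1%:R * GG n j.+1 + (n.+2%:R - j.+1%:R) * GG n j.
Proof.
rewrite /GG FF_mul FF_pascal mulrBr mulrBl -addrA -mulrBl.
by congr (_ + _); rewrite mulrBl addrC.
Qed.

Lemma GG0 n : GG n.+1 0 = 0.
Proof. by rewrite /GG /FF big_ord1 expr0 bin0 mul1r subn0 expr0n /= mulr0. Qed.

Lemma GG0u u : GG 0 u = (u == 0%N)%:R.
Proof.
rewrite /GG /FF; case: u => [|u]; first by rewrite big_ord1 !expr0 bin0 eqxx /= !mulr1n !mul1r.
rewrite big_ord_recl big_ord_recl big1 /=.
  by rewrite !expr0 !mulr1 addr0 /bump /= expr1 subrr.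
by move=> i _; rewrite /bump /= bin_small // mulr0 mul0r.
Qed.
End Alg.

Lemma Pn0 : Pn 0 = [:: [::]].
Proof. by []. Qed.

Lemma cntl0 j : cntl 0 j = (j == 0)%N.
Proof. by rewrite /cntl Pn0 big_seq1 eq_sym. Qed.

Lemma cntl_big n j : (0 < n)%N -> (n <= j)%N -> cntl n j = 0%N.
Proof.
move=> n0 nj; rewrite /cntl big_seq big1 // => t; rewrite /Pn mem_permutations => ht.
have hsz : size t = n by rewrite (perm_size ht) size_iota.
have := desl_le t; rewrite hsz => h.
case: eqP => // e; exfalso; move: h; rewrite e; case: n n0 nj {hsz ht e} => // n _ /=.
by rewrite ltnNge => /negbTE ->.
Qed.

Lemma cntl_GG (R : comNzRingType) n j : (0 < n)%N -> (cntl n j)%:R = GG R n j.+1.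
Proof.
case: n => // n _; elim: n j => [|n IH] j.
  rewrite cntl_rec GG_rec !GG0u !cntl0.
  case: j => [|j] /=.
    by rewrite !mulr0 !mulr1 add0r -natrB.
  by rewrite muln0 sub0n mul0n !mulr0 addr0.
rewrite cntl_rec GG_rec -IH natrD natrM; congr (_ + _).
case: j => [|j]; first by rewrite GG0 mulr0.
rewrite -IH natrM.
case: (leqP j n.+1) => hj.
  by rewrite -(natrB _ (_ : (j.+2 <= n.+3)%N)) // subSS subSS.
by rewrite cntl_big ?(ltnW hj) // !mulr0.
Qed.

Lemma eul_GG (R : comNzRingType) n k : (0 < n)%N -> (eulerian_coef n k)%:R = GG R n k.
Proof.
move=> n0; case: k => [|k] /=; last by rewrite eulerianA_cntl cntl_GG.
by case: n n0 => // n _; rewrite GG0.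
Qed.

Section Lim.
Variable R : archiRealFieldType.
Implicit Types (u v : nat -> R) (a c : R).

Lemma cv_const c : converges_to (fun _ => c) c.
Proof. by move=> e e0; exists 0%N => m _; rewrite subrr normr0. Qed.

Lemma cv_ext u v a : (forall m, u m = v m) -> converges_to u a -> converges_to v a.
Proof. by move=> e h eps /h [N hN]; exists N => m /hN; rewrite e. Qed.

Lemma cv_evt u v a N0 : (forall m, (N0 <= m)%N -> u m = v m) ->
  converges_to u a -> converges_to v a.
Proof.
move=> e h eps /h [N hN]; exists (maxn N N0) => m hm.
rewrite -e; first by apply: hN; exact: leq_trans (leq_maxl _ _) hm.
exact: leq_trans (leq_maxr _ _) hm.
Qed.

Lemma cv_add u v a c : converges_to u a -> converges_to v c ->
  converges_to (fun m => u m + v m) (a + c).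
Proof.
move=> hu hv eps e0.
have e2 : 0 < eps / 2 by rewrite divr_gt0.
have [N1 h1] := hu _ e2; have [N2 h2] := hv _ e2.
exists (maxn N1 N2) => m hm.
have := h1 m (leq_trans (leq_maxl _ _) hm); have := h2 m (leq_trans (leq_maxr _ _) hm).
move=> b2 b1.
rewrite (_ : u m + v m - (a + c) = (u m - a) + (v m - c)); last first.
  by rewrite opprD addrACA.
apply: le_lt_trans (ler_normD _ _) _.
by rewrite [eps](splitr eps) ltrD.
Qed.

Lemma cv_opp u a : converges_to u a -> converges_to (fun m => - u m) (- a).
Proof. by move=> h eps /h [N hN]; exists N => m /hN; rewrite -opprD normrN. Qed.

Lemma cv_bounded u a : converges_to u a -> exists N, forall m, (N <= m)%N -> `|u m| < `|a| + 1.
Proof.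
move=> /(_ 1 ltr01) [N hN]; exists N => m /hN h.
rewrite -(subrK a (u m)) (le_lt_trans (ler_normD _ _)) // addrC ltrD2l //.
Qed.

Lemma cv_mul u v a c : converges_to u a -> converges_to v c ->
  converges_to (fun m => u m * v m) (a * c).
Proof.
move=> hu hv eps e0.
set M := `|a| + 1; set K := `|c| + 1.
have M0 : 0 < M by rewrite ltr_wpDl.
have K0 : 0 < K by rewrite ltr_wpDl.
have [N1 h1] := cv_bounded hu.
have eM : 0 < eps / 2 / M by rewrite !divr_gt0.
have eK : 0 < eps / 2 / K by rewrite !divr_gt0.
have [N2 h2] := hv _ eM.
have [N3 h3] := hu _ eK.
exists (maxn N1 (maxn N2 N3)) => m hm.
have b1 := h1 m (leq_trans (leq_maxl _ _) hm).
have b2 := h2 m (leq_trans (leq_maxl _ _) (leq_trans (leq_maxr _ _) hm)).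
have b3 := h3 m (leq_trans (leq_maxr _ _) (leq_trans (leq_maxr _ _) hm)).
rewrite (_ : u m * v m - a * c = u m * (v m - c) + (u m - a) * c); last first.
  by rewrite mulrBr mulrBl addrA subrK.
apply: le_lt_trans (ler_normD _ _) _.
rewrite [eps](splitr eps); apply: ltrD; rewrite normrM.
  apply: (@le_lt_trans _ _ (M * `|v m - c|)).
    by rewrite ler_wpM2r // ltW.
  by rewrite -ltr_pdivlMl // mulrC.
apply: (@le_lt_trans _ _ (`|u m - a| * K)).
  by rewrite ler_wpM2l // ltW // ltrDl.
by rewrite -ltr_pdivlMr.
Qed.

Lemma cv_sum n (F : 'I_n -> nat -> R) (L : 'I_n -> R) :
  (forall i, converges_to (F i) (L i)) ->
  converges_to (fun m => \sum_(i < n) F i m) (\sum_(i < n) L i).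
Proof.
elim: n F L => [|n IH] F L h.
  by rewrite big_ord0; apply: (cv_ext _ (cv_const 0)) => m; rewrite big_ord0.
rewrite big_ord_recr; apply: (cv_ext _ (cv_add (IH _ _ (fun i => h (widen_ord (leqnSn n) i))) (h ord_max))).
by move=> m; rewrite big_ord_recr.
Qed.

Lemma cv_prod n (F : 'I_n -> nat -> R) (L : 'I_n -> R) :
  (forall i, converges_to (F i) (L i)) ->
  converges_to (fun m => \prod_(i < n) F i m) (\prod_(i < n) L i).
Proof.
elim: n F L => [|n IH] F L h.
  by rewrite big_ord0; apply: (cv_ext _ (cv_const 1)) => m; rewrite big_ord0.
rewrite big_ord_recr; apply: (cv_ext _ (cv_mul (IH _ _ (fun i => h (widen_ord (leqnSn n) i))) (h ord_max))).
by move=> m; rewrite big_ord_recr.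
Qed.

Lemma cv_invB : converges_to (fun b => (b.+1%:R : R)^-1) 0.
Proof.
move=> eps e0.
exists (Num.bound (eps^-1)) => m hm.
rewrite subr0 ger0_norm ?invr_ge0 ?ler0n //.
rewrite -(invrK eps) ltf_pV2 ?posrE ?invr_gt0 ?ltr0Sn //.
have ei : 0 <= eps^-1 by rewrite invr_ge0 ltW.
apply: lt_le_trans (archi_boundP ei) _.
by rewrite ler_nat (leq_trans hm).
Qed.
End Lim.

Section M.
Variable R : archiRealFieldType.

Lemma cv_eql (u : nat -> R) a a' : converges_to u a -> a = a' -> converges_to u a'.
Proof. by move=> h <-. Qed.

Lemma ffactR N n : ((N ^_ n)%:R : R) = \prod_(t < n) (N%:R - t%:R).
Proof.
elim: n => [|n IH]; first by rewrite big_ord0 ffactn0.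
rewrite ffactnSr natrM big_ord_recr /= IH.
case: (leqP n N) => hn; first by rewrite natrB.
by rewrite -IH ffact_small // !mul0r.
Qed.

Lemma prod_constR (x : R) n : \prod_(t < n) x = x ^+ n.
Proof. by rewrite prodr_const card_ord. Qed.

Lemma fact_neq0 n : (n`!%:R : R) != 0.
Proof. by rewrite pnatr_eq0 -lt0n fact_gt0. Qed.

Lemma binR N n : ('C(N, n)%:R : R) = (\prod_(t < n) (N%:R - t%:R)) / n`!%:R.
Proof.
by rewrite -ffactR -bin_ffact natrM mulfK // fact_neq0.
Qed.

Lemma cv_binom n m l : (1 <= m)%N -> (l <= n.+1)%N ->
  converges_to (fun b => ('C(n + (b.+1 * m - l), n))%:R / (b.+1%:R : R) ^+ n)
    (m%:R ^+ n / n`!%:R).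
Proof.
move=> m1 ln.
pose c (t : 'I_n) : R := n%:R - l%:R - t%:R.
pose v b := (\prod_(t < n) (m%:R + c t * (b.+1%:R : R)^-1)) * (n`!%:R)^-1.
apply: (@cv_evt R v _ _ n.+1).
  move=> b hb; rewrite /v binR.
  have hl : (l <= b.+1 * m)%N.
    apply: leq_trans ln _; apply: leq_trans (_ : b.+1 <= _)%N; first by apply: leq_trans hb _.
    by rewrite leq_pmulr.
  have B0 : (b.+1%:R : R) != 0 by rewrite pnatr_eq0.
  rewrite natrD (natrB _ hl) natrM mulrAC; congr (_ * _).
  rewrite -prod_constR -prodf_div; apply: eq_bigr => t _.
  rewrite /c (_ : n%:R + (b.+1%:R * m%:R - l%:R) - t%:R = b.+1%:R * m%:R + (n%:R - l%:R - t%:R) :> R).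
    by rewrite [b.+1%:R * _]mulrC [RHS]mulrDl mulfK.
  by rewrite addrCA -addrA.
apply: cv_mul; last exact: cv_const.
rewrite -prod_constR; apply: cv_prod => t.
apply: (cv_eql (cv_add (cv_const _) (cv_mul (cv_const (c t)) (@cv_invB R)))).
by rewrite mulr0 addr0.
Qed.

Lemma ser_wide n (h : {poly R}) M (g : nat -> R) : (size h <= n.+2)%N -> (n.+2 <= M)%N ->
  \sum_(i < M) h`_i * g i = \sum_(i < n.+2) h`_i * g i.
Proof.
move=> hs hM; rewrite [RHS](big_ord_widen _ (fun i => h`_i * g i) hM).
rewrite [RHS]big_mkcond; apply: eq_bigr => i _; case: ifP => // /negbT; rewrite -leqNgt => hi.
by rewrite nth_default ?mul0r // (leq_trans hs hi).
Qed.

Lemma cv_ser n (h : {poly R}) m : (1 <= n)%N -> (size h <= n.+2)%N ->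
  converges_to (fun b => ser_coef n h (b.+1 * m) / (b.+1%:R : R) ^+ n)
    (h.[1] * m%:R ^+ n / n`!%:R).
Proof.
move=> n1 hs; case: m => [|m].
  rewrite expr0n eqn0Ngt n1 /= mulr0 mul0r.
  apply: (@cv_ext _ (fun b => h`_0 * \prod_(t < n) (b.+1%:R : R)^-1)).
    move=> b; rewrite /ser_coef muln0 big_ord1 addn0 binn mulr1 prod_constR exprVn //.
  apply: (cv_eql (cv_mul (cv_const _) (cv_prod (fun t : 'I_n => @cv_invB R)))).
  by rewrite prod_constR expr0n eqn0Ngt n1 /= mulr0.
pose v b := \sum_(i < n.+2) h`_i * (('C(n + (b.+1 * m.+1 - i), n))%:R / (b.+1%:R : R) ^+ n).
apply: (@cv_evt R v _ _ n.+1).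
  move=> b hb; rewrite /v /ser_coef (@ser_wide n h _ (fun i => ('C(n + (b.+1 * m.+1 - i), n))%:R) hs); last first.
    rewrite ltnS; apply: leq_trans hb _; apply: leq_trans (leqnSn _) _.
    by rewrite leq_pmulr.
  by rewrite mulr_suml; apply: eq_bigr => i _; rewrite mulrA.
apply: (cv_eql (cv_sum (fun i : 'I_n.+2 => cv_mul (cv_const h`_i) (@cv_binom n m.+1 i (ltn0Sn m) (ltn_ord i))))).
rewrite (horner_coef_wide _ hs) mulr_suml mulr_suml; apply: eq_bigr => i _.
by rewrite expr1n mulr1 mulrA.
Qed.
End M.

Unset Implicit Arguments. Set Strict Implicit.

Theorem theorem5p1 (R : archiRealFieldType) (n : nat) (h : {poly R}) :
  (1 <= n)%N -> (size h <= n.+2)%N -> h.[1] != 0 ->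
  forall k : nat,
    converges_to (fun b : nat => hb_coef n h b.+1 k / ((b.+1)%:R ^+ n * h.[1]))
                 ((eulerian_coef n k)%:R / (n`!)%:R).
Proof.
move=> n1 hs h1 k.
rewrite (@eul_GG R n k n1).
apply: (@cv_ext R (fun b => (\sum_(i < k.+1) (-1)^+i * ('C(n.+1,i))%:R *
   (ser_coef n h (b.+1 * (k - i)) / (b.+1%:R : R) ^+ n)) * h.[1]^-1)).
  move=> b; rewrite /hb_coef invfM mulrA; congr (_ * _); rewrite mulr_suml.
  by apply: eq_bigr => i _; rewrite mulrA.
apply: (cv_eql (cv_mul (cv_sum (fun i : 'I_k.+1 => cv_mul (cv_const _) (@cv_ser R n h (k - i) n1 hs))) (cv_const _))).
rewrite /GG /FF !mulr_suml; apply: eq_bigr => i _.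
by rewrite mulrA mulrAC [h.[1] * _]mulrC mulrA mulfK.
Qed.
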